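(* Let $G$ be a finitely generated group which is virtually $\mathbb{Z}$, i.e. $G$ has a subgroup of finite index isomorphic to $\mathbb{Z}$. Let $A$ be a finite alphabet and let $\Phi:A^G\to A^G$ be a cellular automaton on $G$. Then $\Phi$ is sensitive to initial conditions if and only if $\Phi$ has no equicontinuity point.
   Context: Let $E$ be a finite generating set of $G$ closed under inverses, $d_E$ the associated word metric on $G$, and $B_G(g,k)$ the closed ball of radius $k$ in $d_E$. Configurations are elements of $A^G$; $G$ acts on them by $(gx)(h)=x(g^{-1}h)$. The Cantor metric on $A^G$ is $d^E(x,y)=2^{-k}$ where $k=\min\{d_E(1_G,g): x(g)\neq y(g)\}$ (and $d^E(x,x)=0$); $B^E(x,r)$ denotes the closed ball in this metric. A cellular automaton (CA) on $G$ with alphabet $A$ is a map $\Phi:A^G\to A^G$ for which there are a finite set $S\subseteq G$ and a map $\mu:A^S\to A$ with $\Phi(x)(g)=\mu((g^{-1}x)|_S)$ for all $x,g$, i.e. $\Phi(x)(g)=\mu(s\mapsto x(gs))$. A configuration $x$ is an equicontinuity point of $\Phi$ if for every $\epsilon>0$ there is $\delta>0$ such that for all $t\in\mathbb{N}$, $\Phi^t(B^E(x,\delta))\subseteq B^E(\Phi^t(x),\epsilon)$. $\Phi$ is sensitive to initial conditions if there is $\epsilon>0$ such that for every $x\in A^G$ and every $\delta>0$ there exist $t\in\mathbb{N}$ and $y\in B^E(x,\delta)$ with $\Phi^t(y)\notin B^E(\Phi^t(x),\epsilon)$. (These notions do not depend on the choice of the finite generating set $E$.) *)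

(* Defs.v *)
From Stdlib Require Import Reals ZArith List ClassicalEpsilon.
Open Scope R_scope.

Section Defs.
Variables (G : Type) (mul : G -> G -> G) (one : G) (inv : G -> G).

Definition is_group : Prop :=
  (forall a b c, mul a (mul b c) = mul (mul a b) c) /\
  (forall a, mul one a = a) /\ (forall a, mul a one = a) /\
  (forall a, mul (inv a) a = one) /\ (forall a, mul a (inv a) = one).

Definition word_prod (w : list G) : G := fold_right mul one w.

Definition gen_set_closed_inv (E : list G) : Prop :=
  (forall e, In e E -> In (inv e) E) /\
  (forall g, exists w, (forall s, In s w -> In s E) /\ word_prod w = g).

Definition is_word_length (E : list G) (g : G) (n : nat) : Prop :=
  (exists w, (forall s, In s w -> In s E) /\ word_prod w = g /\ length w = n) /\
  (forall w, (forall s, In s w -> In s E) -> word_prod w = g -> (n <= length w)%nat).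

Definition word_length (E : list G) (g : G) : nat :=
  epsilon (inhabits 0%nat) (fun n => is_word_length E g n).

Definition is_subgroup (H : G -> Prop) : Prop :=
  H one /\ (forall a b, H a -> H b -> H (mul a b)) /\ (forall a, H a -> H (inv a)).

Definition finite_index (H : G -> Prop) : Prop :=
  exists reps : list G, forall g, exists r h, In r reps /\ H h /\ g = mul r h.

Definition isomorphic_to_Z (H : G -> Prop) : Prop :=
  exists phi : Z -> G,
    (forall a b, phi (a + b)%Z = mul (phi a) (phi b)) /\
    (forall a b, phi a = phi b -> a = b) /\
    (forall g, H g <-> exists a, phi a = g).

Definition virtually_Z : Prop :=
  exists H : G -> Prop, is_subgroup H /\ finite_index H /\ isomorphic_to_Z H.

Variable A : Type.

Definition finite_type (T : Type) : Prop := exists l : list T, forall a, In a l.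

Definition cantor_dist (E : list G) (x y : G -> A) : R :=
  match excluded_middle_informative (x = y) with
  | left _ => 0
  | right _ =>
      (/ 2) ^ (epsilon (inhabits 0%nat) (fun k =>
         (exists g, x g <> y g /\ word_length E g = k) /\
         (forall g, x g <> y g -> (k <= word_length E g)%nat)))
  end.

Definition cantor_ball (E : list G) (x : G -> A) (r : R) : (G -> A) -> Prop :=
  fun y => cantor_dist E x y <= r.

Definition is_CA (Phi : (G -> A) -> (G -> A)) : Prop :=
  exists (S : list G) (mu : ({s : G | In s S} -> A) -> A),
    forall x g, Phi x g = mu (fun s => x (mul g (proj1_sig s))).

Definition equicontinuity_point (E : list G) (Phi : (G -> A) -> (G -> A)) (x : G -> A) : Prop :=
  forall eps, eps > 0 -> exists delta, delta > 0 /\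
    forall (t : nat) y, cantor_ball E x delta y ->
      cantor_ball E (Nat.iter t Phi x) eps (Nat.iter t Phi y).

Definition sensitive (E : list G) (Phi : (G -> A) -> (G -> A)) : Prop :=
  exists eps, eps > 0 /\ forall x delta, delta > 0 ->
    exists (t : nat) y, cantor_ball E x delta y /\
      ~ cantor_ball E (Nat.iter t Phi x) eps (Nat.iter t Phi y).

End Defs.

(* Main.v *)
Require Import Defs.
From Stdlib Require Import Reals ZArith List Lia Lra.
From Stdlib Require Import Classical ClassicalEpsilon FunctionalExtensionality PropExtensionality.
Open Scope R_scope.

Lemma min_exists (P : nat -> Prop) n : P n -> exists m, P m /\ forall k, P k -> (m <= k)%nat.
Proof.
  revert P. induction n as [n IH] using (well_founded_induction lt_wf). intros P Pn.
  destruct (classic (exists k, (k < n)%nat /\ P k)) as [[k [Hk Pk]]|Hno].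
  - exact (IH k Hk P Pk).
  - exists n. split; auto. intros k Pk. destruct (le_lt_dec n k); auto.
    exfalso; apply Hno; eauto.
Qed.

Lemma hp_le k m : (k <= m)%nat -> (/2)^m <= (/2)^k.
Proof.
  intros H. rewrite !pow_inv. apply Rinv_le_contravar.
  - apply pow_lt; lra.
  - apply Rle_pow; lra || lia.
Qed.

Lemma hp_pos k : 0 < (/2)^k.
Proof. apply pow_lt; lra. Qed.

Lemma word_app G mul one inv (HG : is_group G mul one inv) l1 l2 :
  word_prod G mul one (l1 ++ l2) = mul (word_prod G mul one l1) (word_prod G mul one l2).
Proof.
  destruct HG as [Ha [H1 _]].
  induction l1; simpl. { now rewrite H1. }
  unfold word_prod in *. simpl. rewrite IHl1. apply Ha.
Qed.

Lemma wl_spec G mul one inv E (HE : gen_set_closed_inv G mul one inv E) g :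
  is_word_length G mul one E g (word_length G mul one E g).
Proof.
  unfold word_length. apply epsilon_spec.
  destruct HE as [_ HE]. destruct (HE g) as [w [Hw Hp]].
  destruct (min_exists (fun n => exists w, (forall s, In s w -> In s E) /\ word_prod G mul one w = g /\ length w = n) (length w)) as [m [[w' Hw'] Hm]].
  { exists w; auto. }
  exists m. split; [exists w'; auto|]. intros w2 Hw2 Hp2. apply Hm. exists w2; auto.
Qed.

Lemma wl_le G mul one inv E (HE : gen_set_closed_inv G mul one inv E) g w :
  (forall s, In s w -> In s E) -> word_prod G mul one w = g ->
  (word_length G mul one E g <= length w)%nat.
Proof. intros. destruct (wl_spec G mul one inv E HE g) as [_ H2]. auto. Qed.

Lemma wl_mul G mul one inv E (HG : is_group G mul one inv) (HE : gen_set_closed_inv G mul one inv E) g h :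
  (word_length G mul one E (mul g h) <= word_length G mul one E g + word_length G mul one E h)%nat.
Proof.
  destruct (wl_spec G mul one inv E HE g) as [[w1 [A1 [B1 C1]]] _].
  destruct (wl_spec G mul one inv E HE h) as [[w2 [A2 [B2 C2]]] _].
  rewrite <- C1, <- C2, <- length_app. apply (wl_le G mul one inv E HE).
  - intros s Hs. apply in_app_or in Hs. destruct Hs; auto.
  - rewrite (word_app G mul one inv HG). congruence.
Qed.

Lemma dist_small G mul one A E (x y : G -> A) k :
  (forall g, (word_length G mul one E g <= k)%nat -> x g = y g) ->
  cantor_dist G mul one A E x y <= (/2)^(S k).
Proof.
  intros H. unfold cantor_dist. destruct (excluded_middle_informative (x = y)).
  - left; apply hp_pos.
  - apply hp_le.
    assert (Hex : exists g, x g <> y g).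
    { apply not_all_ex_not. intro H'. apply n. now apply functional_extensionality. }
    destruct Hex as [g0 Hg0].
    destruct (min_exists (fun k => exists g, x g <> y g /\ word_length G mul one E g = k) _ (ex_intro _ g0 (conj Hg0 eq_refl))) as [m [Hm1 Hm2]].
    assert (Hs := epsilon_spec (inhabits 0%nat) (fun k => (exists g, x g <> y g /\ word_length G mul one E g = k) /\
         (forall g, x g <> y g -> (k <= word_length G mul one E g)%nat))).
    destruct Hs as [[g [Hg1 Hg2]] _].
    { exists m. split; auto. intros g Hg. apply Hm2. eauto. }
    rewrite <- Hg2. destruct (le_lt_dec (S k) (word_length G mul one E g)); auto.
    exfalso; apply Hg1, H; lia.
Qed.

Lemma dist_agree G mul one A E (x y : G -> A) k :
  cantor_dist G mul one A E x y <= (/2)^(S k) ->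
  forall g, (word_length G mul one E g <= k)%nat -> x g = y g.
Proof.
  intros H g Hg. apply NNPP. intro Hne.
  unfold cantor_dist in H. destruct (excluded_middle_informative (x = y)) as [e|n].
  { apply Hne. now subst. }
  destruct (min_exists (fun k => exists g, x g <> y g /\ word_length G mul one E g = k) _ (ex_intro _ g (conj Hne eq_refl))) as [m [Hm1 Hm2]].
  assert (Hs := epsilon_spec (inhabits 0%nat) (fun k => (exists g, x g <> y g /\ word_length G mul one E g = k) /\
         (forall g, x g <> y g -> (k <= word_length G mul one E g)%nat))).
  destruct Hs as [_ Hs2].
  { exists m. split; auto. intros g' Hg'. apply Hm2. eauto. }
  specialize (Hs2 g Hne).
  set (e := epsilon _ _) in *.
  assert (H1 : (/2)^k <= (/2)^e) by (apply hp_le; lia).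
  assert (H2 : (/2)^(S k) < (/2)^k) by (simpl; assert (0 < (/2)^k) by apply hp_pos; lra).
  lra.
Qed.

Lemma list_bound {T} (f : T -> Z) l : exists D, (0 <= D)%Z /\ forall x, In x l -> (Z.abs (f x) <= D)%Z.
Proof.
  induction l as [|a l [D [HD H]]].
  - exists 0%Z; split; [lia| intros x []].
  - exists (Z.max D (Z.abs (f a))). split; [lia|]. intros x [<-|Hx]; [lia| specialize (H x Hx); lia].
Qed.

Lemma iter_tr G (mul : G -> G -> G) A (Phi : (G -> A) -> G -> A)
  (Hass : forall a b c, mul a (mul b c) = mul (mul a b) c) S (mu : ({s : G | In s S} -> A) -> A)
  (Hmu : forall x g, Phi x g = mu (fun s => x (mul g (proj1_sig s)))) :
  forall t c x g, Nat.iter t Phi (fun h => x (mul c h)) g = Nat.iter t Phi x (mul c g).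
Proof.
  induction t; intros c x g; simpl; auto.
  rewrite !Hmu. f_equal. apply functional_extensionality; intro s.
  rewrite IHt, Hass. reflexivity.
Qed.

Lemma main G mul one inv (HG : is_group G mul one inv) E (HE : gen_set_closed_inv G mul one inv E)
  (HvZ : virtually_Z G mul one inv) A Phi (HPhi : is_CA G mul A Phi) :
  ~ sensitive G mul one A E Phi -> exists x, equicontinuity_point G mul one A E Phi x.
Proof.
  intros Hns.
  pose (wl := word_length G mul one E).
  assert (Hblock : forall K0, exists (x0 : G -> A) n0, forall y, (forall g, (wl g <= n0)%nat -> x0 g = y g) ->
     forall t g, (wl g <= K0)%nat -> Nat.iter t Phi x0 g = Nat.iter t Phi y g).
  { intro K0. apply NNPP; intro Hn. apply Hns. exists ((/2)^(S K0)). split; [apply hp_pos|].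
    intros x d Hd. apply NNPP; intro Hn2. apply Hn. exists x.
    destruct (pow_lt_1_zero (/2) ltac:(rewrite Rabs_pos_eq; lra) d Hd) as [N HN].
    specialize (HN (S N) ltac:(lia)). rewrite Rabs_pos_eq in HN by (left; apply hp_pos).
    exists N. intros y Hy t g Hg.
    apply (dist_agree G mul one A E _ _ K0); auto.
    apply NNPP; intro Hn3. apply Hn2. exists t, y. split; auto.
    unfold cantor_ball. eapply Rle_trans; [apply (dist_small G mul one A E x y N); auto| lra]. }
  pose proof HG as (Hass & Hl1 & Hr1 & Hlinv & Hrinv).
  destruct HvZ as (H & (HH1 & HHm & HHi) & (reps & Hreps) & (phi & Hphim & Hphii & HphiH)).
  destruct HPhi as (Sm & mu & Hmu).
  assert (cancel_r : forall a b c, mul a c = mul b c -> a = b).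
  { intros a b c Hc. rewrite <- (Hr1 a), <- (Hr1 b), <- (Hrinv c), !Hass, Hc. reflexivity. }
  assert (phi0 : phi 0%Z = one).
  { apply (cancel_r _ _ (phi 0%Z)). rewrite <- Hphim, Hl1. reflexivity. }
  assert (phiA : forall a b x, mul (phi a) (mul (phi b) x) = mul (phi (a+b)%Z) x).
  { intros. rewrite Hass, Hphim. reflexivity. }
  assert (phiK : forall p x, mul (phi (-p)%Z) (mul (phi p) x) = x).
  { intros. rewrite phiA. replace (-p+p)%Z with 0%Z by lia. rewrite phi0; apply Hl1. }
  assert (phiK2 : forall p x, mul (phi p) (mul (phi (-p)%Z) x) = x).
  { intros. rewrite phiA. replace (p+-p)%Z with 0%Z by lia. rewrite phi0; apply Hl1. }
  assert (inv_uniq : forall a b, mul a b = one -> b = inv a).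
  { intros a b Hab. rewrite <- (Hl1 b), <- (Hlinv a), <- Hass, Hab, Hr1. reflexivity. }
  pose (reps' := map inv reps).
  assert (Hdec : forall g, exists r m, In r reps' /\ g = mul (phi m) r).
  { intro g. destruct (Hreps (inv g)) as (r & h & Hr & Hh & Hg).
    destruct (proj1 (HphiH (inv h)) (HHi h Hh)) as [m Hm].
    exists (inv r), m. split. { apply in_map; auto. }
    rewrite Hm.
    assert (Hgg : g = inv (inv g)) by (apply inv_uniq; apply Hlinv).
    rewrite Hgg. symmetry. apply inv_uniq. rewrite Hg.
    rewrite <- Hass, (Hass h), Hrinv, Hl1, Hrinv. reflexivity. }
  pose (rep := fun g => epsilon (inhabits one) (fun r => In r reps' /\ exists m, g = mul (phi m) r)).
  assert (rep_spec : forall g, In (rep g) reps' /\ exists m, g = mul (phi m) (rep g)).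
  { intro g. apply (epsilon_spec (inhabits one) (fun r => In r reps' /\ exists m, g = mul (phi m) r)).
    destruct (Hdec g) as (r & m & ? & ?). eauto. }
  assert (rep_shift : forall p g, rep (mul (phi p) g) = rep g).
  { intros p g. unfold rep. f_equal. apply functional_extensionality; intro r.
    apply propositional_extensionality. split; intros [Hr [m Hm]]; split; auto.
    - exists (-p + m)%Z. rewrite <- phiA, <- Hm, phiK. reflexivity.
    - exists (p+m)%Z. rewrite <- phiA, <- Hm. reflexivity. }
  pose (L := fun g => epsilon (inhabits 0%Z) (fun m => g = mul (phi m) (rep g))).
  assert (L_spec : forall g, g = mul (phi (L g)) (rep g)).
  { intro g. apply (epsilon_spec (inhabits 0%Z) (fun m => g = mul (phi m) (rep g))). apply rep_spec. }
  clearbody L.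
  assert (L_uniq : forall g m, g = mul (phi m) (rep g) -> L g = m).
  { intros g m Hm. apply Hphii. apply (cancel_r _ _ (rep g)). rewrite <- L_spec. exact Hm. }
  assert (L_shift : forall p g, L (mul (phi p) g) = (p + L g)%Z).
  { intros p g. apply L_uniq. rewrite rep_shift, <- phiA, <- L_spec. reflexivity. }
  assert (L_mul : forall g s, L (mul g s) = (L g + L (mul (rep g) s))%Z).
  { intros g s. rewrite (L_spec g) at 1. rewrite <- Hass, L_shift. reflexivity. }
  clearbody rep.
  destruct (list_bound (fun rs : G*G => L (mul (fst rs) (snd rs))) (list_prod reps' (Sm ++ E))) as (D & HD0 & HD).
  assert (L_lip : forall g s, In s (Sm ++ E) -> (Z.abs (L (mul g s) - L g) <= D)%Z).
  { intros g s Hs. rewrite L_mul.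
    assert (Hin : In (rep g, s) (list_prod reps' (Sm++E))) by (apply in_prod; [apply rep_spec| exact Hs]).
    specialize (HD _ Hin). simpl in HD. lia. }
  assert (word1 : forall s, word_prod G mul one (s :: nil) = s).
  { intro s. unfold word_prod; simpl. apply Hr1. }
  assert (L_wl : forall g, (Z.abs (L g - L one) <= D * Z.of_nat (wl g))%Z).
  { intro g. destruct (wl_spec G mul one inv E HE g) as [[w (Hw1 & Hw2 & Hw3)] _].
    fold wl in Hw3. rewrite <- Hw3, <- Hw2. clear Hw2 Hw3.
    induction w as [|s w IH] using rev_ind.
    - unfold word_prod; simpl. lia.
    - rewrite (word_app G mul one inv HG), word1, length_app.
      assert (Hs : In s (Sm ++ E)) by (apply in_or_app; right; apply Hw1, in_or_app; right; left; auto).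
      specialize (L_lip (word_prod G mul one w) s Hs).
      assert (IH' : (Z.abs (L (word_prod G mul one w) - L one) <= D * Z.of_nat (length w))%Z).
      { apply IH. intros s' Hs'. apply Hw1, in_or_app; left; auto. }
      simpl length. rewrite Nat2Z.inj_add. simpl Z.of_nat. lia. }
  assert (wl_one : (wl one <= 0)%nat).
  { apply (wl_le G mul one inv E HE one nil); simpl; auto. contradiction. }
  assert (wl_phi_nat : forall n : nat, (wl (phi (Z.of_nat n)) <= n * wl (phi 1%Z) /\ wl (phi (- Z.of_nat n)%Z) <= n * wl (phi (-1)%Z))%nat).
  { induction n as [|n [IH1 IH2]].
    - simpl. rewrite phi0. lia.
    - rewrite Nat2Z.inj_succ. replace (Z.succ (Z.of_nat n)) with (Z.of_nat n + 1)%Z by lia.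
      replace (- (Z.of_nat n + 1))%Z with (-Z.of_nat n + -1)%Z by lia. rewrite !Hphim.
      pose proof (wl_mul G mul one inv E HG HE (phi (Z.of_nat n)) (phi 1%Z)) as Ha.
      pose proof (wl_mul G mul one inv E HG HE (phi (- Z.of_nat n)%Z) (phi (-1)%Z)) as Hb.
      fold wl in Ha, Hb. split; lia. }
  pose (Ca := (Z.of_nat (wl (phi 1%Z)) + Z.of_nat (wl (phi (-1)%Z)))%Z).
  assert (Ca0 : (0 <= Ca)%Z) by (unfold Ca; lia).
  assert (wl_phi : forall m, (Z.of_nat (wl (phi m)) <= Ca * Z.abs m)%Z).
  { intro m. unfold Ca. destruct (Z_le_gt_dec 0 m).
    - destruct (wl_phi_nat (Z.to_nat m)) as [H1 _]. rewrite Z2Nat.id in H1 by lia.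
      apply Nat2Z.inj_le in H1. rewrite Nat2Z.inj_mul, Z2Nat.id in H1 by lia. nia.
    - destruct (wl_phi_nat (Z.to_nat (-m))) as [_ H1]. rewrite Z2Nat.id in H1 by lia.
      replace (- - m)%Z with m in H1 by lia.
      apply Nat2Z.inj_le in H1. rewrite Nat2Z.inj_mul, Z2Nat.id in H1 by lia. nia. }
  clearbody Ca.
  destruct (list_bound (fun r => Z.of_nat (wl r)) reps') as (Rm & HRm0 & HRm).
  assert (wl_L : forall g, (Z.of_nat (wl g) <= Ca * Z.abs (L g) + Rm)%Z).
  { intro g. pose proof (wl_mul G mul one inv E HG HE (phi (L g)) (rep g)) as Ha.
    pose proof (wl_phi (L g)). pose proof (HRm (rep g) (proj1 (rep_spec g))) as Hb.
    fold wl in Ha. rewrite <- L_spec in Ha. simpl in Hb. lia. }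
  pose proof (iter_tr G mul A Phi Hass Sm mu Hmu) as Htr.
  assert (L_abs : forall g k, (wl g <= k)%nat -> (Z.abs (L g) <= D * Z.of_nat k + Z.abs (L one))%Z).
  { intros g k Hk. pose proof (L_wl g). apply inj_le in Hk. nia. }
  destruct (Hblock (Z.to_nat (Ca * D + Rm))) as (x0 & n0 & Hx0).
  assert (HK0 : forall h, (Z.abs (L h) <= D)%Z -> (wl h <= Z.to_nat (Ca * D + Rm))%nat).
  { intros h Hh. pose proof (wl_L h). nia. }
  pose (c := (D * Z.of_nat n0 + Z.abs (L one))%Z).
  assert (c0 : (0 <= c)%Z) by (unfold c; nia).
  pose (T := (2 * c + 1)%Z).
  pose (z := fun g => x0 (mul (phi (- (T * ((L g + c) / T)))%Z) g)).
  assert (Hz : forall j h, (wl h <= n0)%nat -> z (mul (phi (j * T)%Z) h) = x0 h).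
  { intros j h Hh. unfold z. rewrite L_shift.
    pose proof (L_abs h n0 Hh) as Hl. fold c in Hl.
    assert (Hq : ((j * T + L h + c) / T = j)%Z).
    { symmetry. apply Z.div_unique_pos with (L h + c)%Z; unfold T; lia. }
    rewrite Hq. replace (T * j)%Z with (j * T)%Z by lia. rewrite phiK. reflexivity. }
  clearbody z.
  exists z. intros eps Heps.
  destruct (pow_lt_1_zero (/2) ltac:(rewrite Rabs_pos_eq; lra) eps Heps) as [K HK].
  specialize (HK (S K) ltac:(lia)). rewrite Rabs_pos_eq in HK by (left; apply hp_pos).
  pose (j := (D * Z.of_nat K + Z.abs (L one) + 1)%Z).
  remember (j * T)%Z as M eqn:HM.
  assert (HMj : (j <= M)%Z) by (subst M; unfold T, j in *; nia).
  pose (N := Z.to_nat (Ca * (M + c) + Rm)).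
  assert (wl_N : forall g, (Z.abs (L g) <= M + c)%Z -> (wl g <= N)%nat).
  { intros g Hg. pose proof (wl_L g). unfold N. nia. }
  exists ((/2)^(S N)). split; [apply hp_pos|].
  intros t y Hy. unfold cantor_ball in Hy.
  pose proof (dist_agree G mul one A E z y N Hy) as Hagr. fold wl in Hagr.
  assert (Bstep : forall j' t g, (Z.abs (L g - j' * T) <= D)%Z -> (Z.abs (j' * T) <= M)%Z ->
             Nat.iter t Phi z g = Nat.iter t Phi y g).
  { intros j' t' g H1 H2.
    pose (h := mul (phi (- (j' * T))%Z) g).
    assert (Hg : g = mul (phi (j' * T)%Z) h) by (unfold h; rewrite phiK2; reflexivity).
    rewrite Hg, <- !Htr. apply eq_trans with (Nat.iter t' Phi x0 h).
    - symmetry. apply Hx0.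
      + intros g' Hg'. symmetry. apply Hz; auto.
      + apply HK0. unfold h. rewrite L_shift. lia.
    - apply Hx0.
      + intros g' Hg'. rewrite <- (Hz j' g' Hg'). apply Hagr. apply wl_N.
        rewrite L_shift. pose proof (L_abs g' n0 Hg'). fold c in H. lia.
      + apply HK0. unfold h. rewrite L_shift. lia. }
  assert (Key : forall t g, (Z.abs (L g) <= M)%Z -> Nat.iter t Phi z g = Nat.iter t Phi y g).
  { induction t0 as [|t0 IH]; intros g Hg.
    - simpl. apply Hagr, wl_N. lia.
    - destruct (Z_le_gt_dec (Z.abs (L g)) (M - D)).
      + simpl. rewrite !Hmu. f_equal. apply functional_extensionality. intros [s Hs]. simpl.
        apply IH. assert (Hs' : In s (Sm ++ E)) by (apply in_or_app; left; auto).
        pose proof (L_lip g s Hs'). lia.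
      + destruct (Z_le_gt_dec 0 (L g)).
        * apply (Bstep j); lia.
        * apply (Bstep (-j)%Z); lia. }
  apply Rle_trans with ((/2)^(S K)); [|lra].
  apply dist_small. intros g Hg. apply Key. pose proof (L_abs g K Hg). unfold j in HMj. lia.
Qed.

Theorem theorem1 (G : Type) (mul : G -> G -> G) (one : G) (inv : G -> G)
  (HG : is_group G mul one inv)
  (E : list G) (HE : gen_set_closed_inv G mul one inv E)
  (HvZ : virtually_Z G mul one inv)
  (A : Type) (HA : finite_type A)
  (Phi : (G -> A) -> (G -> A)) (HPhi : is_CA G mul A Phi) :
  sensitive G mul one A E Phi <->
  ~ (exists x : G -> A, equicontinuity_point G mul one A E Phi x).
Proof.
  split.
  - intros [eps [Heps Hs]] [x Hx]. destruct (Hx eps Heps) as [d [Hd Hxd]].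
    destruct (Hs x d Hd) as [t [y [Hy Hn]]]. apply Hn, Hxd, Hy.
  - intro Hno. apply NNPP. intro Hns. apply Hno. exact (main G mul one inv HG E HE HvZ A Phi HPhi Hns).
Qed.
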